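(* For every $\mathbf{h},\mathbf{k}\in\mathbb{N}^n$, letting $t:=|\mathbf{h}+\mathbf{k}|=\deg(\mathbf{x}^{\mathbf{h}}(1-\mathbf{x})^{\mathbf{k}})$, one has $1-\mathbf{x}^{\mathbf{h}}(1-\mathbf{x})^{\mathbf{k}}+C'_t\in M_{2\lceil t/2\rceil}(g_1,\dots,g_n)$, where $g_i:=x_i(1-x_i)$.
   Context: $\mathbf{x}=(x_1,\dots,x_n)$, $\mathbf{x}^{\mathbf{h}}(1-\mathbf{x})^{\mathbf{k}}:=\prod_{i=1}^n x_i^{h_i}(1-x_i)^{k_i}$, $|\mathbf{a}|=\sum_i a_i$. $\Sigma[\mathbf{x}]$ denotes sums of squares of real polynomials; the $r$-truncated quadratic module is $M_r(g_1,\dots,g_n):=\{\sigma_0+\sum_{i=1}^n\sigma_i g_i:\ \sigma_i\in\Sigma[\mathbf{x}],\ \deg\sigma_0\le r,\ \deg(\sigma_i g_i)\le r\}$. For each positive integer $j$, $C_j\le 1$ denotes a constant such that $\prod_{i=1}^j x_i+C_j\in M_{2\lceil j/2\rceil}(g_1,\dots,g_j)$ (in the $j$ variables $x_1,\dots,x_j$), with $C_1:=0$; such constants exist. Then $C'_t:=\sum_{j=1}^t C_j$. *)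

(* Defs.v *)
From HB Require Import structures.
From mathcomp Require Import all_boot all_order all_algebra.
From mathcomp Require Import reals.
From mathcomp Require Import mpoly.
Set Implicit Arguments. Unset Strict Implicit. Unset Printing Implicit Defensive.
Import Order.TTheory GRing.Theory Num.Theory.
Local Open Scope ring_scope.

Definition sos (R : realType) (n : nat) (p : {mpoly R[n]}) : Prop :=
  exists s : seq {mpoly R[n]}, p = \sum_(q <- s) q ^+ 2.

(* degree bound: deg p <= r  (msize p = 1 + total degree, msize 0 = 0) *)
Definition deg_le (R : realType) (n : nat) (p : {mpoly R[n]}) (r : nat) : Prop :=
  (msize p <= r.+1)%N.

Definition trunc_qmodule (R : realType) (n r : nat) (g : 'I_n -> {mpoly R[n]})
    (p : {mpoly R[n]}) : Prop :=
  exists (s0 : {mpoly R[n]}) (s : 'I_n -> {mpoly R[n]}),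
    [/\ sos s0, (forall i, sos (s i)), deg_le s0 r,
        (forall i, deg_le (s i * g i) r) &
        p = s0 + \sum_(i < n) s i * g i].

Definition gbox (R : realType) (n : nat) (i : 'I_n) : {mpoly R[n]} :=
  'X_i * (1 - 'X_i).

Definition xhk (R : realType) (n : nat) (h k : 'I_n -> nat) : {mpoly R[n]} :=
  \prod_(i < n) ('X_i ^+ h i * (1 - 'X_i) ^+ k i).

Definition two_ceil_half (t : nat) : nat := (2 * ((t + 1) %/ 2))%N.

Definition good_const (R : realType) (C : nat -> R) : Prop :=
  C 1%N = 0 /\
  forall j : nat, (0 < j)%N ->
    C j <= 1 /\
    trunc_qmodule (two_ceil_half j) (@gbox R j)
      (\prod_(i < j) 'X_i + (C j)%:MP).

Definition Cprime (R : realType) (C : nat -> R) (t : nat) : R :=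
  \sum_(1 <= j < t.+1) C j.

(* Main.v *)
Require Import Defs.
From HB Require Import structures.
From mathcomp Require Import all_boot all_order all_algebra.
From mathcomp Require Import reals.
From mathcomp Require Import mpoly.
From mathcomp Require Import zify.
Import Order.TTheory GRing.Theory Num.Theory.
Local Open Scope ring_scope.

Lemma dle0 (R : realType) n r : deg_le (0 : {mpoly R[n]}) r.
Proof. by rewrite /deg_le msize0. Qed.

Lemma dle_mono (R : realType) n (p : {mpoly R[n]}) r r' :
  (r <= r')%N -> deg_le p r -> deg_le p r'.
Proof. by rewrite /deg_le => le h; apply: leq_trans h _. Qed.

Lemma dleD (R : realType) n (p q : {mpoly R[n]}) r :
  deg_le p r -> deg_le q r -> deg_le (p + q) r.
Proof.
rewrite /deg_le => hp hq; apply: leq_trans (msizeD_le _ _) _.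
by rewrite geq_max hp hq.
Qed.

Lemma dleN (R : realType) n (p : {mpoly R[n]}) r :
  deg_le p r -> deg_le (- p) r.
Proof. by rewrite /deg_le msizeN. Qed.

Lemma dleZ (R : realType) n (p : {mpoly R[n]}) c r :
  deg_le p r -> deg_le (c *: p) r.
Proof. by rewrite /deg_le => h; apply: leq_trans (msizeZ_le _ _) h. Qed.

Lemma dleM (R : realType) n (p q : {mpoly R[n]}) a b :
  deg_le p a -> deg_le q b -> deg_le (p * q) (a + b).
Proof.
rewrite /deg_le => hp hq.
have [->|nz_p] := eqVneq p 0; first by rewrite mul0r msize0.
have [->|nz_q] := eqVneq q 0; first by rewrite mulr0 msize0.
rewrite msizeM //.
move: hp hq; case: (msize p) => [|mp]; case: (msize q) => [|mq] //=; lia.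
Qed.

Lemma dleX (R : realType) n (p : {mpoly R[n]}) e :
  deg_le p 1 -> deg_le (p ^+ e) e.
Proof.
move=> h; elim: e => [|e IH]; first by rewrite expr0 /deg_le msize1.
by rewrite exprS -add1n; apply: dleM.
Qed.

Lemma dle_sum (R : realType) n (I : Type) (s : seq I) (P : pred I)
   (F : I -> {mpoly R[n]}) r :
  (forall i, P i -> deg_le (F i) r) -> deg_le (\sum_(i <- s | P i) F i) r.
Proof.
move=> h; apply: (big_ind (fun p => deg_le p r)).
- exact: dle0.
- by move=> x y; apply: dleD.
- exact: h.
Qed.

Lemma dle_prod (R : realType) n j (d : 'I_j -> nat)
   (F : 'I_j -> {mpoly R[n]}) :
  (forall i, deg_le (F i) (d i)) -> deg_le (\prod_(i < j) F i) (\sum_(i < j) d i).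
Proof.
move=> h; elim/big_rec2: _ => [|i a p _ hp]; first by rewrite /deg_le msize1.
by apply: dleM.
Qed.

Lemma dle_comp (R : realType) j n (lq : j.-tuple {mpoly R[n]}) (p : {mpoly R[j]}) r :
  (forall i, deg_le (tnth lq i) 1) -> deg_le p r -> deg_le (p \mPo lq) r.
Proof.
move=> hl hp; rewrite comp_mpolyE big_seq.
apply: dle_sum => m mp; apply: dleZ.
have hm : (mdeg m <= r)%N.
  by have := msize_mdeg_lt mp; rewrite /deg_le in hp; lia.
apply: dle_mono hm _; rewrite mdegE.
by apply: dle_prod => i; apply: dleX.
Qed.

Lemma sos0 (R : realType) n : sos (0 : {mpoly R[n]}).
Proof. by exists [::]; rewrite big_nil. Qed.

Lemma sosD (R : realType) n (p q : {mpoly R[n]}) : sos p -> sos q -> sos (p + q).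
Proof. by move=> [s ->] [t ->]; exists (s ++ t); rewrite big_cat. Qed.

Lemma sos_comp (R : realType) j n (lq : j.-tuple {mpoly R[n]}) (p : {mpoly R[j]}) :
  sos p -> sos (p \mPo lq).
Proof.
move=> [s ->]; exists (map (comp_mpoly lq) s).
by rewrite rmorph_sum big_map; apply: eq_bigr => q _; rewrite rmorphXn.
Qed.

Lemma qm0 (R : realType) n r : trunc_qmodule r (@gbox R n) 0.
Proof.
exists 0, (fun _ => 0); split => //; first exact: sos0.
- by move=> i; exact: sos0.
- exact: dle0.
- by move=> i; rewrite mul0r; exact: dle0.
- by rewrite big1 ?addr0 // => i _; rewrite mul0r.
Qed.

Lemma qmD (R : realType) n r (p q : {mpoly R[n]}) :
  trunc_qmodule r (@gbox R n) p -> trunc_qmodule r (@gbox R n) q ->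
  trunc_qmodule r (@gbox R n) (p + q).
Proof.
move=> [s0 [s [h1 h2 h3 h4 ->]]] [t0 [t [k1 k2 k3 k4 ->]]].
exists (s0 + t0), (fun i => s i + t i); split.
- exact: sosD.
- by move=> i; apply: sosD.
- exact: dleD.
- by move=> i; rewrite mulrDl; apply: dleD.
- have -> : \sum_(i < n) (s i + t i) * gbox R i =
     \sum_(i < n) s i * gbox R i + \sum_(i < n) t i * gbox R i.
    by rewrite -big_split; apply: eq_bigr => i _; rewrite mulrDl.
  by rewrite -!addrA; congr (_ + _); rewrite addrCA.
Qed.

Lemma qm_sum (R : realType) n r (I : Type) (s : seq I) (P : pred I)
   (F : I -> {mpoly R[n]}) :
  (forall i, P i -> trunc_qmodule r (@gbox R n) (F i)) ->
  trunc_qmodule r (@gbox R n) (\sum_(i <- s | P i) F i).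
Proof.
move=> h; apply: (big_ind (trunc_qmodule r (@gbox R n))).
- exact: qm0.
- by move=> x y; apply: qmD.
- exact: h.
Qed.

Lemma qm_sos (R : realType) n r (p : {mpoly R[n]}) :
  sos p -> deg_le p r -> trunc_qmodule r (@gbox R n) p.
Proof.
move=> h1 h2; exists p, (fun _ => 0); split => //.
- by move=> i; exact: sos0.
- by move=> i; rewrite mul0r; exact: dle0.
- by rewrite big1 ?addr0 // => i _; rewrite mul0r.
Qed.

Lemma qm_gen (R : realType) n r (p : {mpoly R[n]}) a :
  sos p -> deg_le (p * gbox R a) r -> trunc_qmodule r (@gbox R n) (p * gbox R a).
Proof.
move=> h1 h2; exists 0, (fun i => if i == a then p else 0); split => //.
- exact: sos0.
- by move=> i; case: eqP => _ //; exact: sos0.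
- exact: dle0.
- by move=> i; case: eqP => [->|_] //; rewrite mul0r; exact: dle0.
- rewrite add0r (bigD1 a) //= eqxx big1 ?addr0 // => i /negPf ->.
  by rewrite mul0r.
Qed.

Lemma qm_mono (R : realType) n r r' (p : {mpoly R[n]}) :
  (r <= r')%N -> trunc_qmodule r (@gbox R n) p -> trunc_qmodule r' (@gbox R n) p.
Proof.
move=> le [s0 [s [h1 h2 h3 h4 ->]]]; exists s0, s; split => //.
- exact: dle_mono h3.
- by move=> i; exact: dle_mono (h4 i).
Qed.

Lemma qm_transfer (R : realType) j n r (lq : j.-tuple {mpoly R[n]})
   (sig : 'I_j -> 'I_n) (p : {mpoly R[j]}) :
  (forall i, deg_le (tnth lq i) 1) ->
  (forall i, gbox R i \mPo lq = gbox R (sig i)) ->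
  trunc_qmodule r (@gbox R j) p -> trunc_qmodule r (@gbox R n) (p \mPo lq).
Proof.
move=> hl hg [s0 [s [h1 h2 h3 h4 ->]]].
rewrite rmorphD rmorph_sum /=; apply: qmD.
  by apply: qm_sos; [exact: sos_comp | exact: dle_comp].
apply: qm_sum => i _; rewrite rmorphM /= hg; apply: qm_gen.
  exact: sos_comp.
by rewrite -hg -rmorphM; apply: dle_comp.
Qed.

Definition yf (R : realType) {n : nat} (q : 'I_n * bool) : {mpoly R[n]} :=
  if q.2 then 1 - 'X_q.1 else 'X_q.1.

Lemma yf_dle (R : realType) n q : deg_le (@yf R n q) 1.
Proof.
have hX : deg_le ('X_q.1 : {mpoly R[n]}) 1.
  by rewrite /deg_le msizeX mdeg1.
rewrite /yf; case: q.2 => //; apply: dleD; last exact: dleN.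
by rewrite /deg_le msize1.
Qed.

Lemma yf_g (R : realType) n (q : 'I_n * bool) : @yf R n q * (1 - @yf R n q) = @gbox R n q.1.
Proof. by rewrite /yf /gbox; case: q.2 => //; rewrite mulrC opprB addrC subrK. Qed.

Lemma hyp_list (R : realType) (C : nat -> R) n (u : seq ('I_n * bool)) :
  good_const C -> (0 < size u)%N ->
  trunc_qmodule (two_ceil_half (size u)) (@gbox R n)
    (\prod_(q <- u) yf R q + (C (size u))%:MP).
Proof.
move=> [_ hC] su; have [_ H] := hC _ su.
pose lq := [tuple of map (@yf R n) (in_tuple u)].
have hX : forall i, 'X_i \mPo lq = @yf R n (tnth (in_tuple u) i).
  by move=> i; rewrite comp_mpolyXU -(tnth_nth 0) tnth_map.
have := @qm_transfer R (size u) n _ lq (fun i => (tnth (in_tuple u) i).1) _ _ _ H.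
rewrite rmorphD rmorph_prod /=.
have -> : (C (size u))%:MP \mPo lq = (C (size u))%:MP := comp_mpolyC _ _.
rewrite (eq_bigr _ (fun i _ => hX i)) -(big_tuple _ _ (in_tuple u) predT (@yf R n)).
apply => [i|i]; first by rewrite tnth_map; exact: yf_dle.
by rewrite -yf_g /gbox rmorphM rmorphB rmorph1 /= hX.
Qed.

From mathcomp Require Import ring.

Lemma tch_mono a b : (a <= b)%N -> (two_ceil_half a <= two_ceil_half b)%N.
Proof.
move=> le; rewrite /two_ceil_half leq_mul2l /=; apply: leq_div2r.
by rewrite leq_add2r.
Qed.

Lemma main_list (R : realType) (C : nat -> R) n (u : seq ('I_n * bool)) :
  good_const C ->
  trunc_qmodule (two_ceil_half (size u)) (@gbox R n)
    (1 - \prod_(q <- u) yf R q + (Cprime C (size u))%:MP).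
Proof.
move=> gc; elim: u => [|q u IH].
  by rewrite big_nil /Cprime big_geq // subrr mpolyC0 addr0; exact: qm0.
set fq := (q.1, ~~ q.2).
have hf : yf R fq = 1 - yf R q.
  by rewrite /yf /fq /=; case: q.2 => //=; rewrite opprB addrC subrK.
have hv := @hyp_list R C n (rcons u fq) gc.
rewrite size_rcons -cats1 big_cat big_seq1 /= hf in hv.
have E : 1 - \prod_(x <- q :: u) yf R x + (Cprime C (size (q :: u)))%:MP =
  (1 - \prod_(x <- u) yf R x + (Cprime C (size u))%:MP) +
  ((\prod_(x <- u) yf R x) * (1 - yf R q) + (C (size u).+1)%:MP).
  rewrite big_cons /= /Cprime big_nat_recr //= mpolyCD. ring.
rewrite E; apply: qmD; last by apply: hv.
by apply: qm_mono IH; apply: tch_mono.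
Qed.

Lemma prod_nseq (R : realType) n e (q : 'I_n * bool) :
  \prod_(x <- nseq e q) yf R x = yf R q ^+ e.
Proof. by elim: e => [|e IH]; rewrite ?big_nil ?expr0 // big_cons IH exprS. Qed.

Lemma flat_list (R : realType) n (h k : 'I_n -> nat) (s : seq 'I_n) :
  let fs := flatten [seq nseq (h i) (i, false) ++ nseq (k i) (i, true) | i <- s] in
  \prod_(q <- fs) yf R q = \prod_(i <- s) ('X_i ^+ h i * (1 - 'X_i) ^+ k i) /\
  size fs = (\sum_(i <- s) (h i + k i))%N.
Proof.
elim: s => [|i s [IH1 IH2]] /=; first by rewrite !big_nil.
rewrite !big_cons big_cat big_cat /= !prod_nseq IH1 size_cat size_cat !size_nseq IH2.
by rewrite /yf /=; split => //; rewrite addnA.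
Qed.

Theorem lemma3 (R : realType) (C : nat -> R) (n : nat) (h k : 'I_n -> nat) :
  good_const C ->
  let t := (\sum_(i < n) (h i + k i))%N in
  trunc_qmodule (two_ceil_half t) (@gbox R n)
    (1 - @xhk R n h k + (Cprime C t)%:MP).
Proof.
move=> gc t.
have [E1 E2] := @flat_list R n h k (index_enum 'I_n).
have := @main_list R C n _ gc.
by move=> /(_ (flatten [seq nseq (h i) (i, false) ++ nseq (k i) (i, true) | i <- index_enum 'I_n])); rewrite E1 E2.
Qed.
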